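(* Let $\mathcal{P}$ be a minimum path cover of a tree $T$ and let $e=xy$ be a connector edge of $\mathcal{P}$. Then at least one of $x,y$ is an interior connector vertex.
   Context: A path cover of a tree $T$ is a set of vertex-disjoint paths of $T$ (a single vertex counts as a path) that together cover all vertices of $T$; it is minimum if no path cover has fewer paths. For a path cover $\mathcal{P}$, an edge $xy$ of $T$ with $x,y$ in different paths of $\mathcal{P}$ is a connector edge, and $x,y$ are connector vertices; a connector vertex is interior if it is an interior (non-end) vertex of the path of $\mathcal{P}$ containing it. *)

(* Defs.v *)
From mathcomp Require Import all_boot.
Set Implicit Arguments. Unset Strict Implicit. Unset Printing Implicit Defensive.

Section Defs.
Variables (V : finType) (g : rel V).

Definition simple_graph : Prop := symmetric g /\ irreflexive g.

Definition acyclic : Prop :=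
  forall c : seq V, uniq c -> 3 <= size c -> ~~ cycle g c.

Definition connected : Prop := forall x y : V, connect g x y.

Definition is_tree : Prop := simple_graph /\ connected /\ acyclic.

Definition is_gpath (p : seq V) : bool :=
  if p is x :: q then path g x q && uniq p else false.

Definition is_path_cover (P : seq (seq V)) : Prop :=
  all is_gpath P /\ uniq (flatten P) /\ (forall v : V, v \in flatten P).

Definition is_min_path_cover (P : seq (seq V)) : Prop :=
  is_path_cover P /\ forall P', is_path_cover P' -> size P <= size P'.

Definition same_path (P : seq (seq V)) (x y : V) : bool :=
  has (fun p => (x \in p) && (y \in p)) P.

Definition connector_edge (P : seq (seq V)) (x y : V) : bool :=
  g x y && ~~ same_path P x y.

Definition connector_vertex (P : seq (seq V)) (x : V) : Prop :=
  exists y, connector_edge P x y || connector_edge P y x.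

Definition interior_in (P : seq (seq V)) (x : V) : Prop :=
  exists2 p, p \in P & [&& x \in p, x != head x p & x != last x p].

Definition interior_connector (P : seq (seq V)) (x : V) : Prop :=
  connector_vertex P x /\ interior_in P x.

End Defs.

(* Main.v *)
Require Import Defs.
From mathcomp Require Import all_boot.

Section Aux.
Variables (V : finType) (g : rel V).
Hypothesis gsym : symmetric g.

Lemma gpathE p : is_gpath g p = [&& p != [::], sorted g p & uniq p].
Proof. by case: p. Qed.

Lemma gpath_rev p : is_gpath g p -> is_gpath g (rev p).
Proof.
rewrite !gpathE rev_uniq rev_sorted => /and3P[Hn Hs Hu].
apply/and3P; split => //.
- by case: p Hn {Hs Hu} => // a s _; rewrite rev_cons; case: (rev s).
- case: p Hs {Hn Hu} => //= a s; rewrite (@eq_path _ _ g) //.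
Qed.

Lemma last_rev_head (x : V) p : last x (rev p) = head x p.
Proof. by case: p => //= a s; rewrite rev_cons last_rcons. Qed.

Lemma head_rev_last (x : V) p : head x (rev p) = last x p.
Proof. by case: p => //= a s; rewrite lastI rev_rcons. Qed.

Lemma orient_last p x : is_gpath g p ->
  (x == head x p) || (x == last x p) ->
  exists p', [/\ perm_eq p' p, is_gpath g p' & last x p' = x].
Proof.
move=> Hp /orP[/eqP Hh|/eqP Hl].
- exists (rev p); split; first by rewrite perm_rev.
  + exact: gpath_rev.
  + by rewrite last_rev_head.
- by exists p; split.
Qed.

Lemma orient_head p x : is_gpath g p ->
  (x == head x p) || (x == last x p) ->
  exists p', [/\ perm_eq p' p, is_gpath g p' & head x p' = x].
Proof.
move=> Hp /orP[/eqP Hh|/eqP Hl].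
- by exists p; split.
- exists (rev p); split; first by rewrite perm_rev.
  + exact: gpath_rev.
  + by rewrite head_rev_last.
Qed.

Lemma join_gpath p q x y : is_gpath g p -> is_gpath g q ->
  last x p = x -> head y q = y -> g x y -> uniq (p ++ q) ->
  is_gpath g (p ++ q).
Proof.
case: p => // a s; case: q => // b t /= /andP[Hs _] /andP[Ht _] Hl Hh Hxy Hu.
rewrite Hu andbT cat_path Hs Hl /= Ht andbT.
by rewrite -Hh in Hxy.
Qed.

End Aux.

Theorem lemma3p5 (V : finType) (g : rel V) (P : seq (seq V)) (x y : V) :
  is_tree g -> is_min_path_cover g P -> connector_edge g P x y ->
  interior_connector g P x \/ interior_connector g P y.
Proof.
move=> [[gsym _] _] [[Hall [Hun Hcov]] Hmin] Hce.
have cvx : connector_vertex g P x by exists y; rewrite Hce.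
have cvy : connector_vertex g P y by exists x; rewrite Hce orbT.
case: (boolP [exists p : 'I_(size P), let r := nth [::] P p in
   [&& x \in r, x != head x r & x != last x r]]) => [/existsP[i /and3P[H1 H2 H3]]|Hnx].
  left; split => //; exists (nth [::] P i); first by rewrite mem_nth.
  by rewrite H1 H2 H3.
case: (boolP [exists p : 'I_(size P), let r := nth [::] P p in
   [&& y \in r, y != head y r & y != last y r]]) => [/existsP[i /and3P[H1 H2 H3]]|Hny].
  right; split => //; exists (nth [::] P i); first by rewrite mem_nth.
  by rewrite H1 H2 H3.
exfalso.
have [p pP xp] : exists2 p, p \in P & x \in p by apply/flattenP; apply: Hcov.
have [q qP yq] : exists2 q, q \in P & y \in q by apply/flattenP; apply: Hcov.
have endx : (x == head x p) || (x == last x p).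
  move: Hnx; rewrite negb_exists => /forallP Hnx.
  have := Hnx (Ordinal (etrans (index_mem p P) pP)) => /=.
  rewrite nth_index //= xp /= negb_and !negbK; by [].
have endy : (y == head y q) || (y == last y q).
  move: Hny; rewrite negb_exists => /forallP Hny.
  have := Hny (Ordinal (etrans (index_mem q P) qP)) => /=.
  rewrite nth_index //= yq /= negb_and !negbK; by [].
have gp : is_gpath g p by apply: (allP Hall).
have gq : is_gpath g q by apply: (allP Hall).
move: Hce; rewrite /connector_edge => /andP[gxy nsame].
have pq : p != q.
  apply/eqP=> E; move: nsame; rewrite /same_path; move/hasP; apply.
  by exists p => //; rewrite xp E yq.
have qR : q \in rem p P.
  have := perm_mem (perm_to_rem pP) q.
  by rewrite qP in_cons eq_sym (negbTE pq) /= => <-.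
set R := rem q (rem p P).
have perm1 : perm_eq P (p :: q :: R).
  apply: (perm_trans (perm_to_rem pP)).
  by rewrite perm_cons; apply: perm_to_rem.
have permf : perm_eq (flatten P) (p ++ q ++ flatten R).
  by have := perm_flatten perm1.
have [p' [pp' gp' lp']] := @orient_last V g gsym p x gp endx.
have [q' [qq' gq' hq']] := @orient_head V g gsym q y gq endy.
have permn : perm_eq (p' ++ q' ++ flatten R) (p ++ q ++ flatten R).
  by rewrite (perm_cat pp') // (perm_cat qq').
have unew : uniq (p' ++ q' ++ flatten R).
  by rewrite (perm_uniq permn) -(perm_uniq permf).
have cover' : is_path_cover g ((p' ++ q') :: R).
  split; [|split].
  - rewrite /= (@join_gpath V g p' q' x y gp' gq' lp' hq' gxy) /=; last first.
      by move: unew; rewrite catA cat_uniq => /andP[].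
    apply/allP => r rR; apply: (allP Hall).
    by apply: (mem_rem (mem_rem rR)).
  - by rewrite /= -catA.
  - move=> v; rewrite /= -catA (perm_mem permn) -(perm_mem permf); exact: Hcov.
have := Hmin _ cover'.
by rewrite (perm_size perm1) /= ltnn.
Qed.
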